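(* Let $(f_n)_{n\ge 0}$ be a sequence of positive real numbers such that $\{f_n/f_{n-1}\}_{n\ge1}$ is decreasing, and let $f(a,x)=\sum_{n=0}^{\infty} f_n\frac{(a)_n}{n!}x^n$. Then for $b>a>0$, $\delta>0$ and $x>0$, \[ \frac{\Gamma(a+\delta)\Gamma(b)}{\Gamma(b+\delta)\Gamma(a)}<\frac{f(b+\delta,x)f(a,x)}{f(a+\delta,x)f(b,x)}<1. \]
   Context: $(a)_n=a(a+1)\cdots(a+n-1)$ is the Pochhammer symbol; $\Gamma$ is Euler's gamma function. The inequality is asserted for $x>0$ at which the series converge. *)

(* Defs.v *)
From Stdlib Require Import Reals.
From Coquelicot Require Import Coquelicot.
Open Scope R_scope.

Fixpoint poch (a : R) (n : nat) : R :=
  match n with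
  | O => 1
  | S m => poch a m * (a + INR m)
  end.

Definition Gamma (s : R) : R :=
  RInt_gen (fun t => Rpower t (s - 1) * exp (- t))
           (at_right 0) (Rbar_locally p_infty).

Definition fterm (fs : nat -> R) (a x : R) (n : nat) : R :=
  fs n * poch a n / INR (Factorial.fact n) * x ^ n.

Definition fser (fs : nat -> R) (a x : R) : R := Series (fterm fs a x).

(* Main.v *)
Require Import Defs.
From Stdlib Require Import Reals Lra Lia Psatz Classical.
From Coquelicot Require Import Coquelicot.
Open Scope R_scope.

Lemma exp_le' x y : x <= y -> exp x <= exp y.
Proof. intros [H|H]; [left; now apply exp_increasing | subst; lra]. Qed.

Definition gf (s t : R) := Rpower t (s - 1) * exp (- t).

Lemma gf_pos s t : 0 < gf s t.
Proof. unfold gf, Rpower. apply Rmult_lt_0_compat; apply exp_pos. Qed.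

Lemma gf_cont s t : 0 < t -> continuous (gf s) t.
Proof. intros. apply (@ex_derive_continuous R_AbsRing R_NormedModule). unfold gf, Rpower. auto_derive. lra. Qed.

Lemma gf_exRInt s u v : 0 < u -> u <= v -> ex_RInt (gf s) u v.
Proof. intros. apply (@ex_RInt_continuous R_CompleteNormedModule). intros z Hz.
  rewrite Rmin_left in Hz by lra; rewrite Rmax_right in Hz by lra. apply gf_cont; lra. Qed.

Lemma I_mono s u' u v v' : 0 < u' -> u' <= u -> u <= v -> v <= v' ->
  RInt (gf s) u v <= RInt (gf s) u' v'.
Proof.
  intros.
  rewrite <- (RInt_Chasles (gf s) u' u v') by (apply gf_exRInt; lra).
  rewrite <- (RInt_Chasles (gf s) u v v') by (apply gf_exRInt; lra).
  assert (0 <= RInt (gf s) u' u) by (apply RInt_ge_0; [lra| apply gf_exRInt; lra | intros; left; apply gf_pos]).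
  assert (0 <= RInt (gf s) v v') by (apply RInt_ge_0; [lra| apply gf_exRInt; lra | intros; left; apply gf_pos]).
  change plus with Rplus. lra.
Qed.

Lemma ln_le_sub1 y : 0 < y -> ln y <= y - 1.
Proof. intros. generalize (exp_ineq1_le (ln y)). rewrite exp_ln; lra. Qed.

Lemma log_bound c t : 0 < c -> 0 < t -> c * ln t <= c * ln (2*c) - c + t/2.
Proof.
  intros Hc Ht.
  replace t with ((2*c) * (t/(2*c))) at 1 by (field; lra).
  rewrite ln_mult by (try apply Rdiv_lt_0_compat; lra).
  generalize (ln_le_sub1 (t/(2*c)) ltac:(apply Rdiv_lt_0_compat; lra)). intros H.
  assert (c * ln (t / (2 * c)) <= c * (t / (2 * c) - 1)) by (apply Rmult_le_compat_l; lra).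
  replace (c * (t / (2 * c) - 1)) with (t/2 - c) in H0 by (field; lra). nra.
Qed.

Lemma tail_bound e c t : 0 < c -> e <= c -> 1 <= t ->
  exp (e * ln t) * exp (- t) <= exp (c * ln (2*c) - c) * exp (- (t/2)).
Proof.
  intros Hc He Ht. rewrite <- !exp_plus. apply exp_le'.
  assert (0 <= ln t) by (rewrite <- ln_1; apply ln_le; lra).
  generalize (log_bound c t Hc ltac:(lra)). nra.
Qed.

Lemma RInt_FTC (F f : R -> R) a b : a <= b ->
  (forall x, a <= x <= b -> is_derive F x (f x)) ->
  (forall x, a <= x <= b -> continuous f x) -> RInt f a b = F b - F a.
Proof.
  intros Hab HF Hf. apply is_RInt_unique.
  apply (is_RInt_derive F f); rewrite Rmin_left, Rmax_right; auto.
Qed.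

Lemma ex_RInt_FTC (f : R -> R) a b : a <= b ->
  (forall x, a <= x <= b -> continuous f x) -> ex_RInt f a b.
Proof.
  intros Hab Hf. apply (@ex_RInt_continuous R_CompleteNormedModule).
  rewrite Rmin_left, Rmax_right; auto.
Qed.

Lemma I_bound s : 0 < s -> exists B, forall u v, 0 < u -> u <= v -> RInt (gf s) u v <= B.
Proof.
  intros Hs. set (c := Rabs (s-1) + 1). assert (Hc : 0 < c) by (unfold c; generalize (Rabs_pos (s-1)); lra).
  set (K := exp (c * ln (2*c) - c)). assert (HK : 0 < K) by apply exp_pos.
  exists (1/s + 2*K). intros u v Hu Huv.
  set (u' := Rmin u 1). set (v' := Rmax v 1).
  assert (Hu' : 0 < u' <= 1) by (unfold u'; split; [apply Rmin_glb_lt; lra | apply Rmin_r]).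
  assert (Hv' : 1 <= v') by (unfold v'; apply Rmax_r).
  apply Rle_trans with (RInt (gf s) u' v').
  { apply I_mono; [lra | unfold u'; apply Rmin_l | lra | unfold v'; apply Rmax_l]. }
  rewrite <- (RInt_Chasles (gf s) u' 1 v') by (apply gf_exRInt; lra).
  change plus with Rplus.
  assert (H1 : RInt (gf s) u' 1 <= 1/s).
  { apply Rle_trans with (RInt (fun t => exp ((s-1) * ln t)) u' 1).
    - apply RInt_le; try lra. apply gf_exRInt; lra.
      apply ex_RInt_FTC; [lra|]. intros. apply (@ex_derive_continuous R_AbsRing R_NormedModule). auto_derive. lra.
      intros x Hx. unfold gf, Rpower. rewrite <- (Rmult_1_r (exp ((s-1) * ln x))) at 2.
      apply Rmult_le_compat_l. left; apply exp_pos. rewrite <- exp_0. apply exp_le'. lra.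
    - rewrite (RInt_FTC (fun t => exp (s * ln t) / s)); try lra.
      + rewrite ln_1, Rmult_0_r, exp_0. 
        assert (0 < exp (s * ln u') / s) by (apply Rdiv_lt_0_compat; [apply exp_pos | lra]). lra.
      + intros x Hx. auto_derive. lra.
        replace ((s-1) * ln x) with (s * ln x + - ln x) by ring. rewrite exp_plus, exp_Ropp, exp_ln by lra. field. lra.
      + intros. apply (@ex_derive_continuous R_AbsRing R_NormedModule). auto_derive. lra. }
  assert (H2 : RInt (gf s) 1 v' <= 2 * K).
  { apply Rle_trans with (RInt (fun t => K * exp (- (t/2))) 1 v').
    - apply RInt_le; try lra. apply gf_exRInt; lra.
      apply ex_RInt_FTC; [lra|]. intros. apply (@ex_derive_continuous R_AbsRing R_NormedModule). auto_derive. auto.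
      intros x Hx. unfold gf, Rpower. apply tail_bound; try lra. unfold c. generalize (Rle_abs (s-1)). lra.
    - rewrite (RInt_FTC (fun t => -2 * K * exp (- (t/2)))); try lra.
      + generalize (exp_pos (- (v'/2))) (exp_pos (-(1/2))). intros.
        generalize (exp_le' (-(1/2)) 0 ltac:(lra)); rewrite exp_0; intro. nra.
      + intros x Hx. auto_derive. auto. change (-2 * K * (- (1 * / 2) * exp (- (x * / 2))) = K * exp (- (x / 2)) :> R). unfold Rdiv; field.
      + intros. apply (@ex_derive_continuous R_AbsRing R_NormedModule). auto_derive. auto. }
  lra.
Qed.

Definition GammaSpec (s g : R) :=
  (forall u v, 0 < u -> u <= v -> RInt (gf s) u v <= g) /\
  (forall eps, 0 < eps -> exists u0 v0, 0 < u0 /\ u0 <= v0 /\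
     forall u v, 0 < u -> u <= u0 -> v0 <= v -> g - eps < RInt (gf s) u v).

Lemma Gamma_spec s : 0 < s -> GammaSpec s (Gamma s).
Proof.
  intros Hs.
  set (E := fun y => exists u v, 0 < u /\ u <= v /\ y = RInt (gf s) u v).
  assert (Hb : bound E).
  { destruct (I_bound s Hs) as [B HB]. exists B. intros y (u & v & Hu & Huv & ->). auto. }
  assert (He : exists y, E y) by (exists (RInt (gf s) 1 1); exists 1, 1; repeat split; lra).
  destruct (completeness E Hb He) as [m [Hm1 Hm2]].
  assert (Hspec : GammaSpec s m).
  { split.
    - intros u v Hu Huv. apply Hm1. exists u, v; auto.
    - intros eps Heps.
      destruct (classic (exists y, E y /\ m - eps < y)) as [[y [(u & v & Hu & Huv & ->) Hy]]|Hn].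
      + exists u, v. repeat split; auto. intros u1 v1 Hu1 Hu1u Hvv1.
        apply Rlt_le_trans with (1 := Hy). apply I_mono; lra.
      + exfalso. assert (m <= m - eps); [|lra]. apply Hm2. intros y Ey.
        apply Rnot_lt_le. intro. apply Hn. exists y; auto. }
  replace (Gamma s) with m; auto.
  symmetry. unfold Gamma. change (fun t => Rpower t (s - 1) * exp (- t)) with (gf s).
  apply (@is_RInt_gen_unique R_CompleteNormedModule).
  - apply Proper_StrongProper, at_right_proper_filter.
  - apply Proper_StrongProper, Rbar_locally_filter.
  - intros P [eps HP].
    destruct (proj2 Hspec eps (cond_pos eps)) as (u0 & v0 & Hu0 & Huv0 & Happ).
    apply Filter_prod with (fun u => 0 < u <= u0) (fun v => v0 < v).
    + exists (mkposreal u0 Hu0). intros y Hy Hy0. change (Rabs (y - 0) < u0) in Hy.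
      rewrite Rminus_0_r, Rabs_pos_eq in Hy by lra. simpl; lra.
    + exists v0. auto.
    + intros u v [Hu Hu'] Hv. exists (RInt (gf s) u v). split.
      * apply RInt_correct. apply gf_exRInt; lra.
      * apply HP. change (Rabs (RInt (gf s) u v - m) < eps).
        assert (RInt (gf s) u v <= m) by (apply (proj1 Hspec); lra).
        generalize (Happ u v Hu Hu' ltac:(lra)). intros. rewrite Rabs_left1 by lra. lra.
Qed.

Lemma GammaSpec_unique s g1 g2 : GammaSpec s g1 -> GammaSpec s g2 -> g1 = g2.
Proof.
  intros [A1 B1] [A2 B2].
  apply Rle_antisym; apply Rnot_lt_le; intro H.
  - destruct (B1 (g1 - g2) ltac:(lra)) as (u0 & v0 & Hu & Huv & Hap).
    generalize (Hap u0 v0 Hu (Rle_refl _) (Rle_refl _)) (A2 u0 v0 Hu Huv). lra.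
  - destruct (B2 (g2 - g1) ltac:(lra)) as (u0 & v0 & Hu & Huv & Hap).
    generalize (Hap u0 v0 Hu (Rle_refl _) (Rle_refl _)) (A1 u0 v0 Hu Huv). lra.
Qed.

Lemma Gamma_pos s : 0 < s -> 0 < Gamma s.
Proof.
  intros Hs. destruct (Gamma_spec s Hs) as [A _].
  set (m := exp (- (Rabs (s-1) * ln 2) - 2)).
  apply Rlt_le_trans with (RInt (fun _ => m) 1 2).
  - rewrite RInt_const. change (0 < (2 - 1) * m). unfold m. generalize (exp_pos (- (Rabs (s - 1) * ln 2) - 2)). lra.
  - apply Rle_trans with (RInt (gf s) 1 2); [|apply A; lra].
    apply RInt_le; try lra. apply ex_RInt_const. apply gf_exRInt; lra.
    intros t Ht. unfold gf, Rpower, m. rewrite <- exp_plus. apply exp_le'.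
    assert (0 <= ln t) by (rewrite <- ln_1; apply ln_le; lra).
    assert (ln t <= ln 2) by (apply ln_le; lra).
    assert (- (Rabs (s-1) * ln t) <= (s - 1) * ln t).
    { destruct (Rle_lt_dec 0 (s-1)). rewrite Rabs_pos_eq by lra. nra. rewrite Rabs_left by lra. nra. }
    generalize (Rabs_pos (s-1)). nra.
Qed.

Definition Bd (s t : R) := exp (s * ln t) * exp (- t).

Lemma IBP s u v : 0 < u -> u <= v ->
  RInt (gf (s+1)) u v = Bd s u - Bd s v + s * RInt (gf s) u v.
Proof.
  intros Hu Huv.
  assert (H1 : is_RInt (fun t => gf (s+1) t - s * gf s t) u v (Bd s u - Bd s v)).
  { replace (Bd s u - Bd s v) with (minus ((fun t => - Bd s t) v) ((fun t => - Bd s t) u))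
      by (unfold minus, plus, opp; simpl; ring).
    apply (@is_RInt_derive R_CompleteNormedModule (fun t => - Bd s t)).
    - intros x Hx. rewrite Rmin_left, Rmax_right in Hx by lra. unfold Bd, gf, Rpower. auto_derive. lra.
      replace (s + 1 - 1) with s by ring.
      replace ((s-1) * ln x) with (s * ln x + - ln x) by ring. rewrite exp_plus, (exp_Ropp (ln x)), exp_ln by lra. field. lra.
    - intros x Hx. rewrite Rmin_left, Rmax_right in Hx by lra.
      apply (@ex_derive_continuous R_AbsRing R_NormedModule). unfold gf, Rpower. auto_derive. lra. }
  assert (H2 := is_RInt_scal (gf s) u v s _ (RInt_correct _ _ _ (gf_exRInt s u v Hu Huv))).
  assert (H3 := is_RInt_plus _ _ _ _ _ _ H1 H2).
  apply is_RInt_unique. 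
  replace (Bd s u - Bd s v + s * RInt (gf s) u v) with (plus (Bd s u - Bd s v) (scal s (RInt (gf s) u v)))
    by (unfold plus, scal; simpl; unfold mult; simpl; ring).
  apply is_RInt_ext with (2 := H3). intros x _. unfold plus, scal; simpl; unfold mult; simpl; ring.
Qed.

Lemma Bd_0 s : 0 < s -> forall eps, 0 < eps -> exists eta, 0 < eta /\ forall t, 0 < t <= eta -> Bd s t < eps.
Proof.
  intros Hs eps He. exists (exp (ln eps / s - 1)). split. apply exp_pos.
  intros t [Ht Ht']. unfold Bd.
  assert (ln t <= ln eps / s - 1) by (rewrite <- (ln_exp (ln eps / s - 1)); apply ln_le; lra).
  assert (s * ln t < ln eps).
  { apply Rmult_le_compat_l with (r := s) in H; [|lra].
    replace (s * (ln eps / s - 1)) with (ln eps - s) in H by (field; lra). lra. }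
  apply Rlt_le_trans with (exp (ln eps) * 1).
  - assert (exp (s * ln t) < exp (ln eps)) by now apply exp_increasing.
    generalize (exp_le' (-t) 0 ltac:(lra)); rewrite exp_0. generalize (exp_pos (-t)) (exp_pos (s * ln t)). nra.
  - rewrite exp_ln; lra.
Qed.

Lemma Bd_inf s : 0 < s -> forall eps, 0 < eps -> exists V, 1 <= V /\ forall t, V <= t -> Bd s t < eps.
Proof.
  intros Hs eps He. set (c := s). set (K := exp (c * ln (2*c) - c)).
  exists (Rmax 1 (2 * (ln K - ln eps) + 1)). split. apply Rmax_l.
  intros t Ht. assert (Ht1 : 1 <= t) by (generalize (Rmax_l 1 (2 * (ln K - ln eps) + 1)); lra).
  assert (Ht2 : 2 * (ln K - ln eps) + 1 <= t) by (generalize (Rmax_r 1 (2 * (ln K - ln eps) + 1)); lra).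
  unfold Bd. eapply Rle_lt_trans. apply (tail_bound s c t); unfold c; lra.
  fold K. replace eps with (K * exp (ln eps - ln K)).
  - apply Rmult_lt_compat_l. apply exp_pos. apply exp_increasing. lra.
  - unfold Rminus. rewrite exp_plus, (exp_Ropp (ln K)), exp_ln, exp_ln by (try apply exp_pos; lra). field.
    apply Rgt_not_eq, exp_pos.
Qed.

Lemma Gamma_rec s : 0 < s -> Gamma (s + 1) = s * Gamma s.
Proof.
  intros Hs. apply (GammaSpec_unique (s+1)). apply Gamma_spec; lra.
  destruct (Gamma_spec s Hs) as [A B]. split.
  - intros u v Hu Huv. apply Rnot_lt_le. intro Hc.
    destruct (Bd_0 s Hs (RInt (gf (s + 1)) u v - s * Gamma s) ltac:(lra)) as (eta & Heta & Hb).
    set (u' := Rmin u eta).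
    assert (Hu' : 0 < u' <= u /\ u' <= eta) by (unfold u'; repeat split; [apply Rmin_glb_lt; lra| apply Rmin_l | apply Rmin_r]).
    destruct Hu' as [[Hu'1 Hu'2] Hu'3].
    assert (RInt (gf (s+1)) u v <= RInt (gf (s+1)) u' v) by (apply I_mono; lra).
    rewrite (IBP s u' v) in H by lra.
    generalize (Hb u' ltac:(lra)) (A u' v ltac:(lra) ltac:(lra)). intros HB1 HA1.
    assert (s * RInt (gf s) u' v <= s * Gamma s) by (apply Rmult_le_compat_l; lra). unfold Bd in *. 
    generalize (exp_pos (s * ln v)) (exp_pos (- v)). intros. 
    assert (0 < exp (s * ln v) * exp (-v)) by (apply Rmult_lt_0_compat; auto). lra.
  - intros eps He. destruct (B (eps / (2*s)) ltac:(apply Rdiv_lt_0_compat; lra)) as (u0 & v0 & Hu0 & Huv0 & Hap).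
    destruct (Bd_inf s Hs (eps/2) ltac:(lra)) as (V & HV & Hb).
    exists u0, (Rmax v0 V). split; auto. split. generalize (Rmax_l v0 V); lra.
    intros u v Hu Huu Hv. assert (v0 <= v) by (generalize (Rmax_l v0 V); lra).
    assert (V <= v) by (generalize (Rmax_r v0 V); lra).
    rewrite IBP by lra. generalize (Hap u v Hu Huu H) (Hb v H0). intros.
    assert (0 < Bd s u) by (unfold Bd; apply Rmult_lt_0_compat; apply exp_pos).
    assert (s * (Gamma s - eps / (2 * s)) = s * Gamma s - eps/2) by (field; lra).
    nra.
Qed.

Lemma young l p q : 0 < l < 1 -> exp (l * p + (1 - l) * q) <= l * exp p + (1 - l) * exp q.
Proof.
  intros Hl. set (m := l * p + (1 - l) * q).
  assert (exp p = exp m * exp (p - m)) by (rewrite <- exp_plus; f_equal; ring).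
  assert (exp q = exp m * exp (q - m)) by (rewrite <- exp_plus; f_equal; ring).
  generalize (exp_ineq1_le (p - m)) (exp_ineq1_le (q - m)) (exp_pos m). intros.
  rewrite H, H0.
  assert (l * (exp m * exp (p - m)) >= l * (exp m * (1 + (p - m)))) by (apply Rle_ge, Rmult_le_compat_l; [lra| apply Rmult_le_compat_l; lra]).
  assert ((1-l) * (exp m * exp (q - m)) >= (1-l) * (exp m * (1 + (q - m)))) by (apply Rle_ge, Rmult_le_compat_l; [lra| apply Rmult_le_compat_l; lra]).
  assert (l * (exp m * (1 + (p - m))) + (1-l) * (exp m * (1 + (q - m))) = exp m) by (unfold m; ring).
  lra.
Qed.

Lemma Gamma_holder x y l : 0 < x -> 0 < y -> 0 < l < 1 ->
  ln (Gamma (l * x + (1 - l) * y)) <= l * ln (Gamma x) + (1 - l) * ln (Gamma y).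
Proof.
  intros Hx Hy Hl. set (z := l * x + (1 - l) * y).
  assert (Hz : 0 < z) by (unfold z; nra).
  assert (Gx := Gamma_pos x Hx). assert (Gy := Gamma_pos y Hy). assert (Gz := Gamma_pos z Hz).
  set (K := exp (l * ln (Gamma x) + (1 - l) * ln (Gamma y))).
  rewrite <- (ln_exp (l * ln (Gamma x) + (1 - l) * ln (Gamma y))). apply ln_le; auto. fold K.
  destruct (Gamma_spec x Hx) as [Ax _]. destruct (Gamma_spec y Hy) as [Ay _].
  destruct (Gamma_spec z Hz) as [_ Bz].
  assert (Hb : forall u v, 0 < u -> u <= v -> RInt (gf z) u v <= K).
  { intros u v Hu Huv.
    set (g := fun t => K * (l / Gamma x * gf x t + (1 - l) / Gamma y * gf y t)).
    assert (Hg : is_RInt g u v (K * (l / Gamma x * RInt (gf x) u v + (1 - l) / Gamma y * RInt (gf y) u v))).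
    { assert (H1 := is_RInt_scal _ u v (l / Gamma x) _ (RInt_correct _ _ _ (gf_exRInt x u v Hu Huv))).
      assert (H2 := is_RInt_scal _ u v ((1-l) / Gamma y) _ (RInt_correct _ _ _ (gf_exRInt y u v Hu Huv))).
      assert (H3 := is_RInt_plus _ _ _ _ _ _ H1 H2).
      assert (H4 := is_RInt_scal _ u v K _ H3).
      apply is_RInt_ext with (2 := H4). intros. unfold g, plus, scal; simpl; unfold mult; simpl; ring. }
    apply Rle_trans with (RInt g u v).
    - apply RInt_le; auto. apply gf_exRInt; auto. eexists; eauto.
      intros t Ht. unfold g, gf, Rpower, K. rewrite <- !exp_plus.
      set (P := (x - 1) * ln t + - t - ln (Gamma x)).
      set (Q := (y - 1) * ln t + - t - ln (Gamma y)).
      assert (E1 : exp ((x - 1) * ln t + - t) / Gamma x = exp P).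
      { unfold P. replace ((x - 1) * ln t + - t - ln (Gamma x)) with (((x - 1) * ln t + - t) + - ln (Gamma x)) by ring.
        rewrite (exp_plus ((x - 1) * ln t + - t) (- ln (Gamma x))), (exp_Ropp (ln (Gamma x))), exp_ln by auto. field. lra. }
      assert (E2 : exp ((y - 1) * ln t + - t) / Gamma y = exp Q).
      { unfold Q. replace ((y - 1) * ln t + - t - ln (Gamma y)) with (((y - 1) * ln t + - t) + - ln (Gamma y)) by ring.
        rewrite (exp_plus ((y - 1) * ln t + - t) (- ln (Gamma y))), (exp_Ropp (ln (Gamma y))), exp_ln by auto. field. lra. }
      replace (l / Gamma x * exp ((x - 1) * ln t + - t)) with (l * exp P) by (rewrite <- E1; field; lra).
      replace ((1 - l) / Gamma y * exp ((y - 1) * ln t + - t)) with ((1 - l) * exp Q) by (rewrite <- E2; field; lra).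
      replace ((z - 1) * ln t + - t) with ((l * ln (Gamma x) + (1 - l) * ln (Gamma y)) + (l * P + (1 - l) * Q))
        by (unfold P, Q, z; ring).
      rewrite exp_plus. apply Rmult_le_compat_l. left; apply exp_pos. apply young; auto.
    - rewrite (is_RInt_unique _ _ _ _ Hg).
      generalize (Ax u v Hu Huv) (Ay u v Hu Huv). intros.
      assert (l / Gamma x * RInt (gf x) u v <= l) by (apply Rmult_le_reg_r with (Gamma x); auto; unfold Rdiv; field_simplify; nra).
      assert ((1 - l) / Gamma y * RInt (gf y) u v <= 1 - l) by (apply Rmult_le_reg_r with (Gamma y); auto; unfold Rdiv; field_simplify; nra).
      assert (0 < K) by apply exp_pos. nra. }
  apply Rnot_lt_le. intro Hc.
  destruct (Bz (Gamma z - K) ltac:(lra)) as (u0 & v0 & Hu0 & Huv0 & Hap).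
  generalize (Hap u0 v0 Hu0 (Rle_refl _) (Rle_refl _)) (Hb u0 v0 Hu0 Huv0). lra.
Qed.

Definition LG s := ln (Gamma s).

Lemma three_point p q r : 0 < p -> p < q -> q < r ->
  (r - p) * LG q <= (r - q) * LG p + (q - p) * LG r.
Proof.
  intros Hp Hpq Hqr. set (l := (r - q) / (r - p)).
  assert (Hl : 0 < l < 1) by (unfold l; split; [apply Rdiv_lt_0_compat; lra | apply Rmult_lt_reg_r with (r - p); [lra|]; unfold Rdiv; field_simplify; lra]).
  assert (Eq : q = l * p + (1 - l) * r) by (unfold l; field; lra).
  generalize (Gamma_holder p r l Hp ltac:(lra) Hl). rewrite <- Eq. unfold LG. intros H.
  apply Rmult_le_compat_l with (r := r - p) in H; [|lra].
  replace ((r - p) * (l * ln (Gamma p) + (1 - l) * ln (Gamma r))) with ((r - q) * ln (Gamma p) + (q - p) * ln (Gamma r)) in H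
    by (unfold l; field; lra). exact H.
Qed.

Lemma LG_slope s t d : 0 < s -> s < t -> 0 < d -> LG (s + d) - LG s <= LG (t + d) - LG t.
Proof.
  intros Hs Hst Hd.
  destruct (Rtotal_order (s + d) t) as [H|[H|H]].
  - generalize (three_point s (s+d) t Hs ltac:(lra) H) (three_point (s+d) t (t+d) ltac:(lra) H ltac:(lra)).
    intros H1 H2. set (D := t - s - d). assert (0 < D) by (unfold D; lra).
    assert (D * (LG (s+d) - LG s) <= D * (LG (t+d) - LG t)).
    { replace (t - s) with (D + d) in H1 by (unfold D; ring). replace (t - (s + d)) with D in H1 by (unfold D; ring).
      replace (s + d - s) with d in H1 by ring.
      replace (t + d - (s + d)) with (D + d) in H2 by (unfold D; ring). replace (t + d - t) with d in H2 by ring.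
      replace (t - (s + d)) with D in H2 by (unfold D; ring). nra. }
    apply Rmult_le_reg_l with D; lra.
  - subst t. generalize (three_point s (s+d) (s+d+d) Hs ltac:(lra) ltac:(lra)).
    replace (s + d + d - s) with (2*d) by ring. replace (s + d + d - (s + d)) with d by ring.
    replace (s + d - s) with d by ring. intros. nra.
  - generalize (three_point s t (s+d) Hs Hst H) (three_point t (s+d) (t+d) ltac:(lra) H ltac:(lra)).
    intros H1 H2. set (E := s + d - t). set (F := t - s).
    assert (0 < E) by (unfold E; lra). assert (0 < F) by (unfold F; lra).
    replace (s + d - s) with (E + F) in H1 by (unfold E, F; ring). replace (s + d - t) with E in H1 by (unfold E; ring).
    replace (t - s) with F in H1 by (unfold F; ring).
    replace (t + d - t) with (E + F) in H2 by (unfold E, F; ring). replace (t + d - (s + d)) with F in H2 by (unfold F; ring).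
    replace (s + d - t) with E in H2 by (unfold E; ring).
    assert (E * (LG t - LG s) <= E * (LG (t+d) - LG (s + d))) by nra.
    assert (LG t - LG s <= LG (t+d) - LG (s + d)) by (apply Rmult_le_reg_l with E; lra).
    lra.
Qed.

Lemma Gamma_ratio_mono s t d : 0 < s -> s <= t -> 0 < d ->
  Gamma (s + d) * Gamma t <= Gamma (t + d) * Gamma s.
Proof.
  intros Hs Hst Hd. destruct Hst as [Hst| ->]; [|lra].
  generalize (LG_slope s t d Hs Hst Hd). unfold LG. intros H.
  assert (ln (Gamma (s + d) * Gamma t) <= ln (Gamma (t + d) * Gamma s)).
  { rewrite !ln_mult by (apply Gamma_pos; lra). lra. }
  apply exp_le' in H0. rewrite !exp_ln in H0; auto;
  apply Rmult_lt_0_compat; apply Gamma_pos; lra.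
Qed.

Lemma Gamma_poch s n : 0 < s -> Gamma (s + INR n) = poch s n * Gamma s.
Proof.
  intros Hs. induction n.
  - simpl. rewrite Rplus_0_r. ring.
  - rewrite S_INR. replace (s + (INR n + 1)) with ((s + INR n) + 1) by ring.
    rewrite Gamma_rec by (generalize (pos_INR n); lra). rewrite IHn. simpl. ring.
Qed.

Lemma poch_pos s n : 0 < s -> 0 < poch s n.
Proof. intros Hs. induction n; simpl. lra. apply Rmult_lt_0_compat; auto. generalize (pos_INR n); lra. Qed.

Lemma ex_series_lin (a b : nat -> R) c1 c2 : ex_series a -> ex_series b ->
  ex_series (fun n => c1 * a n + c2 * b n).
Proof.
  intros Ha Hb. apply (@ex_series_plus R_AbsRing R_NormedModule (fun n => c1 * a n) (fun n => c2 * b n)); apply (@ex_series_scal_l R_AbsRing R_NormedModule); auto.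
Qed.

Lemma Series_lin (a b : nat -> R) c1 c2 : ex_series a -> ex_series b ->
  Series (fun n => c1 * a n + c2 * b n) = c1 * Series a + c2 * Series b.
Proof.
  intros Ha Hb. rewrite Series_plus.
  - rewrite !Series_scal_l. auto.
  - apply (@ex_series_scal_l R_AbsRing R_NormedModule); auto.
  - apply (@ex_series_scal_l R_AbsRing R_NormedModule); auto.
Qed.

Lemma ex_series_scalR (a : nat -> R) c : ex_series a -> ex_series (fun n => c * a n).
Proof. intros. apply (@ex_series_scal_l R_AbsRing R_NormedModule); auto. Qed.

Lemma Series_zero : Series (fun _ => 0) = 0.
Proof. rewrite (Series_ext _ (fun n => 0 * (fun _ => 0) n)) by (intros; ring).
  rewrite Series_scal_l. ring. Qed.

Lemma partial_le_Series (a : nat -> R) N : (forall n, 0 <= a n) -> ex_series a ->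
  sum_f_R0 a N <= Series a.
Proof.
  intros Hp Ha. rewrite (Series_incr_n a (S N)) by (auto; lia). simpl pred.
  assert (0 <= Series (fun k => a (S N + k)%nat)); [|lra].
  rewrite <- Series_zero. apply Series_le. intros; split; [lra| auto].
  apply (ex_series_incr_n a (S N)); auto.
Qed.

Lemma Series_nonneg (a : nat -> R) : (forall n, 0 <= a n) -> ex_series a -> 0 <= Series a.
Proof. intros. rewrite <- Series_zero. apply Series_le; auto. intros; split; [lra|auto]. Qed.

Lemma sum_ge_term (a : nat -> R) k : (forall n, 0 <= a n) -> a k <= sum_f_R0 a k.
Proof. intros Hp. destruct k; simpl. lra. assert (0 <= sum_f_R0 a k) by (apply cond_pos_sum; auto). lra. Qed.

Lemma Series_pos (a : nat -> R) k : (forall n, 0 <= a n) -> 0 < a k -> ex_series a -> 0 < Series a.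
Proof.
  intros Hp Hk Ha. apply Rlt_le_trans with (sum_f_R0 a k).
  generalize (sum_ge_term a k Hp); lra. apply partial_le_Series; auto.
Qed.

Lemma Series_lt (u v : nat -> R) k : (forall n, u n <= v n) -> u k < v k ->
  ex_series u -> ex_series v -> Series u < Series v.
Proof.
  intros Hle Hk Hu Hv.
  assert (0 < Series (fun n => 1 * v n + (-1) * u n)).
  { apply Series_pos with k. intros n; generalize (Hle n); lra. lra. apply ex_series_lin; auto. }
  rewrite Series_lin in H by auto. lra.
Qed.

Lemma Series_le' (u v : nat -> R) : (forall n, u n <= v n) -> ex_series u -> ex_series v -> Series u <= Series v.
Proof.
  intros Hle Hu Hv.
  assert (0 <= Series (fun n => 1 * v n + (-1) * u n)).
  { apply Series_nonneg. intros n; generalize (Hle n); lra. apply ex_series_lin; auto. }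
  rewrite Series_lin in H by auto. lra.
Qed.

Lemma ex_series_bounded (a : nat -> R) B : (forall n, 0 <= a n) -> (forall N, sum_f_R0 a N <= B) -> ex_series a.
Proof.
  intros Hp HB.
  destruct (growing_cv (sum_f_R0 a)) as [l Hl].
  - intro n. simpl. generalize (Hp (S n)). lra.
  - exists B. intros x [i ->]. auto.
  - exists l. apply is_series_Reals. exact Hl.
Qed.

Lemma strict_mono (f : nat -> R) : (forall n, f n < f (S n)) -> forall m n, (m < n)%nat -> f m < f n.
Proof.
  intros H m n Hmn. induction Hmn. apply H. apply Rlt_trans with (f m0); auto.
Qed.

Lemma weak_mono (f : nat -> R) : (forall n, f n < f (S n)) -> forall m n, (m <= n)%nat -> f m <= f n.
Proof.
  intros H m n Hmn. destruct (Nat.eq_dec m n). subst; lra. left; apply strict_mono; auto; lia.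
Qed.

Lemma min_exists (Q : nat -> Prop) : (exists n, Q n) -> exists n, Q n /\ forall m, (m < n)%nat -> ~ Q m.
Proof.
  intros [n Hn]. revert Hn. induction n as [n IH] using (well_founded_induction Wf_nat.lt_wf). intros Hn.
  destruct (classic (exists m, (m < n)%nat /\ Q m)) as [[m [Hm Qm]]|Hno].
  - apply (IH m Hm Qm).
  - exists n. split; auto. intros m Hm Qm. apply Hno. eauto.
Qed.

Lemma cheb (al r p : nat -> R) :
  (forall n, 0 < al n) -> (forall n, r n < r (S n)) -> (forall n, p n < p (S n)) ->
  ex_series al -> ex_series (fun n => al n * r n) -> ex_series (fun n => al n * p n) ->
  ex_series (fun n => al n * r n * p n) ->
  Series (fun n => al n * p n) * Series (fun n => al n * r n)
  < Series (fun n => al n * r n * p n) * Series al.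
Proof.
  intros Hal Hr Hp Ea Ear Eap Earp.
  assert (S0 : 0 < Series al) by (apply (Series_pos al 0); auto; intros; left; auto).
  set (P := Series (fun n => al n * p n) / Series al).
  assert (Ez : ex_series (fun n => 1 * (al n * p n) + (- P) * al n)) by (apply ex_series_lin; auto).
  assert (Z : Series (fun n => 1 * (al n * p n) + (- P) * al n) = 0).
  { rewrite Series_lin by auto. unfold P. field. lra. }
  assert (Hp0 : p 0%nat < P).
  { apply Rnot_le_lt. intro HP.
    assert (0 < Series (fun n => 1 * (al n * p n) + (- P) * al n)); [|lra].
    apply (Series_pos _ 1); auto.
    - intros n. assert (p 0%nat <= p n) by (apply weak_mono; auto; lia). generalize (Hal n). nra.
    - generalize (Hp 0%nat) (Hal 1%nat). nra. }
  assert (Hex : exists k, P < p k).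
  { apply NNPP. intro Hn.
    assert (Series (fun n => 1 * (al n * p n) + (- P) * al n) < Series (fun _ => 0)); [|rewrite Series_zero in H; lra].
    apply (Series_lt _ _ 0); auto.
    - intros n. assert (p n <= P) by (apply Rnot_lt_le; intro; apply Hn; eauto). generalize (Hal n). nra.
    - generalize (Hal 0%nat). nra.
    - exists 0. apply is_series_Reals. intros e He. exists 0%nat. intros. unfold R_dist. rewrite sum_cte. 
      rewrite Rmult_0_l, Rminus_0_r, Rabs_R0. auto. }
  destruct (min_exists _ Hex) as [K [HK HKmin]].
  assert (HK0 : K <> 0%nat) by (intro; subst; lra).
  assert (Ez2 : ex_series (fun n => 1 * (al n * r n * p n) + (- P) * (al n * r n))) by (apply ex_series_lin; auto).
  assert (Hpos : 0 < Series (fun n => 1 * (al n * r n * p n) + (- P) * (al n * r n))).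
  { replace 0 with (r K * Series (fun n => 1 * (al n * p n) + (- P) * al n)) by (rewrite Z; ring).
    rewrite <- Series_scal_l.
    apply (Series_lt _ _ 0).
    - intros n. destruct (Compare_dec.lt_dec n K) as [Hn|Hn].
      + assert (p n <= P) by (apply Rnot_lt_le; apply HKmin; auto).
        assert (r n <= r K) by (apply weak_mono; auto; lia). generalize (Hal n). intro.
        assert (0 <= (r K - r n) * (al n * (P - p n))) by (apply Rmult_le_pos; nra). nra.
      + assert (p K <= p n) by (apply weak_mono; auto; lia).
        assert (r K <= r n) by (apply weak_mono; auto; lia). generalize (Hal n). intro.
        assert (0 <= (r n - r K) * (al n * (p n - P))) by (apply Rmult_le_pos; nra). nra.
    - assert (r 0%nat < r K) by (apply strict_mono; auto; lia). generalize (Hal 0%nat). intro.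
      assert (0 < (r K - r 0%nat) * (al 0%nat * (P - p 0%nat))) by (apply Rmult_lt_0_compat; nra). nra.
    - apply (ex_series_scalR (fun n => 1 * (al n * p n) + - P * al n) (r K)). auto.
    - auto. }
  rewrite Series_lin in Hpos by auto.
  unfold P in Hpos. 
  assert (0 < Series (fun n => al n * r n * p n) * Series al - Series (fun n => al n * p n) * Series (fun n => al n * r n)); [|lra].
  replace (Series (fun n => al n * r n * p n) * Series al - Series (fun n => al n * p n) * Series (fun n => al n * r n))
    with (Series al * (1 * Series (fun n => al n * r n * p n) + - (Series (fun n => al n * p n) / Series al) * Series (fun n => al n * r n)))
    by (field; lra).
  apply Rmult_lt_0_compat; auto.
Qed.

Lemma ex_series_extR (a b : nat -> R) : (forall n, a n = b n) -> ex_series a -> ex_series b.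
Proof. intros H [l Hl]. exists l. apply (is_series_ext a b l H Hl). Qed.

Lemma is_series_extR (a b : nat -> R) l : (forall n, a n = b n) -> is_series a l -> is_series b l.
Proof. intros H Hl. apply (is_series_ext a b l H Hl). Qed.

Lemma sum_mono_N (a : nat -> R) m n : (forall k, 0 <= a k) -> (m <= n)%nat -> sum_f_R0 a m <= sum_f_R0 a n.
Proof.
  intros Hp Hmn. induction Hmn. lra. simpl. generalize (Hp (S m0)). lra.
Qed.

Lemma term_le_sum (a : nat -> R) k n : (forall i, 0 <= a i) -> (k <= n)%nat -> a k <= sum_f_R0 a n.
Proof. intros. apply Rle_trans with (sum_f_R0 a k). apply sum_ge_term; auto. apply sum_mono_N; auto. Qed.

Lemma sum_swap (f : nat -> nat -> R) J L :
  sum_f_R0 (fun l => sum_f_R0 (fun j => f j l) J) L = sum_f_R0 (fun j => sum_f_R0 (fun l => f j l) L) J.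
Proof.
  induction L; simpl. reflexivity. rewrite IHL. rewrite <- plus_sum. reflexivity.
Qed.

Lemma diag_tri (u : nat -> nat -> R) N :
  sum_f_R0 (fun n => sum_f_R0 (fun k => u k (n - k)%nat) n) N =
  sum_f_R0 (fun j => sum_f_R0 (fun l => u j l) (N - j)) N.
Proof.
  induction N.
  - simpl. reflexivity.
  - rewrite (tech5 (fun n => sum_f_R0 (fun k => u k (n - k)%nat) n) N). rewrite IHN.
    rewrite (tech5 (fun j => sum_f_R0 (fun l => u j l) (S N - j)) N).
    replace (S N - S N)%nat with 0%nat by lia.
    rewrite (sum_eq (fun j => sum_f_R0 (fun l => u j l) (S N - j)) (fun j => sum_f_R0 (fun l => u j l) (N - j) + u j (S N - j)%nat)).
    + rewrite plus_sum. rewrite (tech5 (fun k => u k (S N - k)%nat) N). replace (S N - S N)%nat with 0%nat by lia. change (sum_f_R0 (fun l => u (S N) l) 0) with (u (S N) 0%nat). ring.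
    + intros i Hi. replace (S N - i)%nat with (S (N - i)) by lia. simpl. reflexivity.
Qed.

Lemma Series_le_bound (a : nat -> R) B : ex_series a -> (forall N, sum_f_R0 a N <= B) -> Series a <= B.
Proof.
  intros Ha HB. apply Rnot_lt_le. intro H.
  generalize (Series_correct a Ha). intro Hs. apply is_series_Reals in Hs.
  destruct (Hs (Series a - B) ltac:(lra)) as [N HN]. specialize (HN N (le_n _)). specialize (HB N).
  unfold R_dist in HN. apply Rabs_def2 in HN. lra.
Qed.

Lemma series_finsum (u : nat -> nat -> R) J : (forall j, ex_series (u j)) ->
  ex_series (fun l => sum_f_R0 (fun j => u j l) J) /\
  Series (fun l => sum_f_R0 (fun j => u j l) J) = sum_f_R0 (fun j => Series (u j)) J.
Proof.
  intros He. induction J.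
  - simpl. split; auto.
  - destruct IHJ as [E1 E2]. simpl.
    assert (E3 := ex_series_lin _ _ 1 1 E1 (He (S J))).
    split.
    + apply (ex_series_extR (fun n => 1 * sum_f_R0 (fun j => u j n) J + 1 * u (S J) n)). intros; ring. exact E3.
    + rewrite <- E2. rewrite <- (Series_ext (fun n => 1 * sum_f_R0 (fun j => u j n) J + 1 * u (S J) n)) by (intros; ring).
      rewrite Series_lin by auto. ring.
Qed.

Lemma fubini (u : nat -> nat -> R) T : (forall j l, 0 <= u j l) ->
  is_series (fun n => sum_f_R0 (fun k => u k (n - k)%nat) n) T ->
  (forall j, ex_series (u j)) /\ is_series (fun j => Series (u j)) T.
Proof.
  intros Hp Hs.
  set (d := fun n => sum_f_R0 (fun k => u k (n - k)%nat) n).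
  assert (Hd : forall n, 0 <= d n) by (intros; apply cond_pos_sum; auto).
  assert (HST : Series d = T) by (apply is_series_unique; auto).
  assert (HDT : forall N, sum_f_R0 d N <= T) by (intros; rewrite <- HST; apply partial_le_Series; auto; eexists; eauto).
  assert (Hrect : forall J L, sum_f_R0 (fun j => sum_f_R0 (fun l => u j l) L) J <= T).
  { intros J L. apply Rle_trans with (sum_f_R0 d (J + L)); auto.
    unfold d. rewrite diag_tri.
    apply Rle_trans with (sum_f_R0 (fun j => sum_f_R0 (fun l => u j l) (J + L - j)) J).
    - apply sum_Rle. intros j Hj. apply sum_mono_N; auto. lia.
    - apply sum_mono_N; [|lia]. intros; apply cond_pos_sum; auto. }
  assert (Hrow : forall j, ex_series (u j)).
  { intros j. apply ex_series_bounded with T; auto. intros L.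
    apply Rle_trans with (2 := Hrect j L).
    apply (term_le_sum (fun j => sum_f_R0 (fun l => u j l) L)); auto. intros; apply cond_pos_sum; auto. }
  split; auto.
  apply is_series_Reals. intros eps Heps.
  generalize Hs. intro Hs'. apply is_series_Reals in Hs'. destruct (Hs' eps Heps) as [N HN].
  exists N. intros n Hn. specialize (HN n Hn). unfold R_dist in *.
  assert (Hup : sum_f_R0 (fun j => Series (u j)) n <= T).
  { destruct (series_finsum u n Hrow) as [E1 E2]. rewrite <- E2. apply Series_le_bound; auto.
    intros L. rewrite sum_swap. auto. }
  assert (Hlo : sum_f_R0 d n <= sum_f_R0 (fun j => Series (u j)) n).
  { unfold d. rewrite diag_tri. apply sum_Rle. intros j Hj. apply partial_le_Series; auto. }
  fold d in HN. apply Rabs_def2 in HN. apply Rabs_def1; lra.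
Qed.

Definition ee (u : R) k := poch u k / INR (Factorial.fact k).

Lemma fact_pos k : 0 < INR (Factorial.fact k).
Proof. apply lt_0_INR. apply Nat.neq_0_lt_0. apply Factorial.fact_neq_0. Qed.

Lemma ee_rec u k : INR (S k) * ee u (S k) = (u + INR k) * ee u k.
Proof.
  unfold ee. simpl poch. change (Factorial.fact (S k)) with (S k * Factorial.fact k)%nat.
  rewrite mult_INR. generalize (fact_pos k) (lt_0_INR (S k) ltac:(lia)). intros. field. lra.
Qed.

Lemma sum_shift (f : nat -> R) n : sum_f_R0 f (S n) = f 0%nat + sum_f_R0 (fun j => f (S j)) n.
Proof.
  induction n. simpl. ring. rewrite tech5, IHn. simpl. ring.
Qed.

Lemma vander u v n : sum_f_R0 (fun k => ee u k * ee v (n - k)) n = ee (u + v) n.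
Proof.
  induction n.
  - unfold ee. simpl. field.
  - apply Rmult_eq_reg_l with (INR (S n)); [| apply not_0_INR; lia].
    rewrite ee_rec. rewrite <- IHn.
    set (T := fun k => ee u k * ee v (S n - k)).
    assert (Split : INR (S n) * sum_f_R0 T (S n) =
      sum_f_R0 (fun k => INR k * T k) (S n) + sum_f_R0 (fun k => (INR (S n) - INR k) * T k) (S n)).
    { rewrite <- plus_sum, scal_sum. apply sum_eq. intros. ring. }
    rewrite Split.
    assert (A : sum_f_R0 (fun k => INR k * T k) (S n) = sum_f_R0 (fun j => (u + INR j) * (ee u j * ee v (n - j))) n).
    { rewrite sum_shift. simpl INR at 1. rewrite Rmult_0_l, Rplus_0_l. apply sum_eq. intros j Hj.
      unfold T. replace (S n - S j)%nat with (n - j)%nat by lia. rewrite <- Rmult_assoc, ee_rec. ring. }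
    assert (B : sum_f_R0 (fun k => (INR (S n) - INR k) * T k) (S n) = sum_f_R0 (fun j => (v + INR n - INR j) * (ee u j * ee v (n - j))) n).
    { rewrite tech5. replace (INR (S n) - INR (S n)) with 0 by ring. rewrite Rmult_0_l, Rplus_0_r.
      apply sum_eq. intros j Hj. unfold T. replace (S n - j)%nat with (S (n - j)) by lia.
      replace (INR (S n) - INR j) with (INR (S (n - j))) by (rewrite !S_INR, minus_INR by lia; ring).
      replace ((INR (S (n - j))) * (ee u j * ee v (S (n - j)))) with (ee u j * (INR (S (n - j)) * ee v (S (n - j)))) by ring.
      rewrite ee_rec. rewrite minus_INR by lia. ring. }
    rewrite A, B, <- plus_sum, scal_sum. apply sum_eq. intros. ring.
Qed.

Lemma fterm_ee fs s x n : fterm fs s x n = fs n * ee s n * x ^ n.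
Proof. unfold fterm, ee. generalize (fact_pos n). intros. field. lra. Qed.

Lemma ee_pos s n : 0 < s -> 0 < ee s n.
Proof. intros. unfold ee. apply Rdiv_lt_0_compat. apply poch_pos; auto. apply fact_pos. Qed.

Lemma fterm_pos fs s x n : (forall n, 0 < fs n) -> 0 < s -> 0 < x -> 0 < fterm fs s x n.
Proof. intros. rewrite fterm_ee. apply Rmult_lt_0_compat. apply Rmult_lt_0_compat; auto. apply ee_pos; auto. apply pow_lt; auto. Qed.

Lemma pos3 a b c : 0 < a -> 0 < b -> 0 < c -> 0 < a * b * c.
Proof. intros. apply Rmult_lt_0_compat; auto. apply Rmult_lt_0_compat; auto. Qed.

Definition Gj fs s x j := Series (fun l => fs (j + l)%nat * ee s l * x ^ l).

Lemma decomp fs s d x : (forall n, 0 < fs n) -> 0 < s -> 0 < d -> 0 < x ->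
  ex_series (fterm fs (s + d) x) ->
  (forall j, ex_series (fun l => fs (j + l)%nat * ee s l * x ^ l)) /\
  is_series (fun j => ee d j * x ^ j * Gj fs s x j) (fser fs (s + d) x).
Proof.
  intros Hf Hs Hd Hx He.
  set (u := fun j l => ee d j * x ^ j * (fs (j + l)%nat * ee s l * x ^ l)).
  assert (Hu : forall j l, 0 <= u j l).
  { intros. unfold u. left. apply Rmult_lt_0_compat; [apply Rmult_lt_0_compat | apply pos3]; auto using ee_pos, pow_lt. }
  assert (Hdiag : is_series (fun n => sum_f_R0 (fun k => u k (n - k)%nat) n) (fser fs (s + d) x)).
  { apply (is_series_extR (fterm fs (s + d) x)); [|apply Series_correct; auto].
    intros n. rewrite fterm_ee.
    rewrite (sum_eq _ (fun k => (ee d k * ee s (n - k)) * (fs n * x ^ n))).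
    - rewrite <- scal_sum, vander. rewrite Rplus_comm. ring.
    - intros k Hk. unfold u. replace (k + (n - k))%nat with n by lia.
      replace (x ^ n) with (x ^ k * x ^ (n - k)) by (rewrite <- pow_add; f_equal; lia). ring. }
  destruct (fubini u _ Hu Hdiag) as [Hrow Hsum].
  assert (Hrow' : forall j, ex_series (fun l => fs (j + l)%nat * ee s l * x ^ l)).
  { intros j. assert (0 < ee d j * x ^ j) by (apply Rmult_lt_0_compat; auto using ee_pos, pow_lt).
    apply (ex_series_extR (fun l => / (ee d j * x ^ j) * u j l)).
    intros l. unfold u. rewrite <- Rmult_assoc, Rinv_l, Rmult_1_l by lra. reflexivity. apply ex_series_scalR. auto. }
  split; auto.
  apply (is_series_extR (fun j => Series (u j))); auto.
  intros j. unfold u, Gj. rewrite Series_scal_l. reflexivity.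
Qed.

Lemma rho_dec fs : (forall n, 0 < fs n) ->
  (forall n, (1 <= n)%nat -> fs (S n) / fs n < fs n / fs (n - 1)%nat) ->
  forall j l, fs (S j + S l)%nat / fs (S l) < fs (S j + l)%nat / fs l.
Proof.
  intros Hf Hdec.
  assert (Hrho : forall m, fs (S (S m)) / fs (S m) < fs (S m) / fs m).
  { intros m. generalize (Hdec (S m) ltac:(lia)). replace (S m - 1)%nat with m by lia. auto. }
  induction j; intros l.
  - replace (1 + S l)%nat with (S (S l)) by lia. replace (1 + l)%nat with (S l) by lia. apply Hrho.
  - replace (S (S j) + S l)%nat with (S (S (S j + l))) by lia.
    replace (S (S j) + l)%nat with (S (S j + l)) by lia.
    specialize (IHj l). replace (S j + S l)%nat with (S (S j + l)) in IHj by lia.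
    assert (E1 : fs (S (S (S j + l))) / fs (S l) = (fs (S (S (S j + l))) / fs (S (S j + l))) * (fs (S (S j + l)) / fs (S l)))
      by (generalize (Hf (S (S j + l))) (Hf (S l)); intros; field; lra).
    assert (E2 : fs (S (S j + l)) / fs l = (fs (S (S j + l)) / fs (S j + l)%nat) * (fs (S j + l)%nat / fs l))
      by (generalize (Hf (S j + l)%nat) (Hf l); intros; field; lra).
    rewrite E1, E2.
    specialize (Hrho (S j + l)%nat).
    assert (0 < fs (S (S (S j + l))) / fs (S (S j + l))) by (apply Rdiv_lt_0_compat; auto).
    assert (0 < fs (S (S j + l)) / fs (S l)) by (apply Rdiv_lt_0_compat; auto).
    apply Rmult_gt_0_lt_compat; try lra.
Qed.

Lemma ratio_incr a b n : 0 < a -> a < b -> poch b n / poch a n < poch b (S n) / poch a (S n).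
Proof.
  intros Ha Hab. simpl. generalize (poch_pos a n Ha) (poch_pos b n ltac:(lra)) (pos_INR n). intros.
  assert (0 < a + INR n) by lra.
  replace (poch b n * (b + INR n) / (poch a n * (a + INR n))) with ((poch b n / poch a n) * ((b + INR n) / (a + INR n)))
    by (field; lra).
  assert (1 < (b + INR n) / (a + INR n)) by (apply Rmult_lt_reg_r with (a + INR n); auto; field_simplify; lra).
  assert (0 < poch b n / poch a n) by (apply Rdiv_lt_0_compat; auto). nra.
Qed.

Lemma upper fs a b d x : (forall n, 0 < fs n) ->
  (forall n, (1 <= n)%nat -> fs (S n) / fs n < fs n / fs (n - 1)%nat) ->
  0 < a -> a < b -> 0 < d -> 0 < x ->
  ex_series (fterm fs a x) -> ex_series (fterm fs b x) ->
  ex_series (fterm fs (a + d) x) -> ex_series (fterm fs (b + d) x) ->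
  fser fs (b + d) x * fser fs a x < fser fs (a + d) x * fser fs b x.
Proof.
  intros Hf Hdec Ha Hab Hd Hx Ea Eb Ead Ebd.
  destruct (decomp fs a d x Hf Ha Hd Hx Ead) as [Ra Sa].
  destruct (decomp fs b d x Hf ltac:(lra) Hd Hx Ebd) as [Rb Sb].
  assert (G0 : forall s, Gj fs s x 0 = fser fs s x).
  { intros. unfold Gj, fser. apply Series_ext. intros. rewrite fterm_ee. reflexivity. }
  assert (Key : forall j, Gj fs b x (S j) * fser fs a x < Gj fs a x (S j) * fser fs b x).
  { intros j.
    set (al := fterm fs a x). set (r := fun n => poch b n / poch a n).
    set (p := fun l => - (fs (S j + l)%nat / fs l)).
    assert (Hal : forall n, 0 < al n) by (intros; apply fterm_pos; auto).
    assert (Ear : forall n, al n * r n = fterm fs b x n).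
    { intros. unfold al, r, fterm. generalize (poch_pos a n Ha) (fact_pos n). intros. field. lra. }
    assert (Eap : forall n, al n * p n = - (fs (S j + n)%nat * ee a n * x ^ n)).
    { intros. unfold al, p. rewrite fterm_ee. generalize (Hf n). intros. field. lra. }
    assert (Earp : forall n, al n * r n * p n = - (fs (S j + n)%nat * ee b n * x ^ n)).
    { intros. rewrite Ear. unfold p. rewrite fterm_ee. generalize (Hf n). intros. field. lra. }
    assert (C := cheb al r p Hal).
    rewrite (Series_ext _ _ Ear), (Series_ext _ _ Eap), (Series_ext _ _ Earp) in C.
    rewrite !Series_opp in C. unfold al in C. fold (fser fs a x) in C. fold (fser fs b x) in C.
    fold (Gj fs a x (S j)) in C. fold (Gj fs b x (S j)) in C.
    assert (- Gj fs a x (S j) * fser fs b x < - Gj fs b x (S j) * fser fs a x); [|lra].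
    apply C.
    - intros. apply ratio_incr; auto.
    - intros. unfold p. generalize (rho_dec fs Hf Hdec j n). lra.
    - auto.
    - apply (ex_series_extR (fterm fs b x)); auto.
    - apply (ex_series_extR (fun n => -1 * (fs (S j + n)%nat * ee a n * x ^ n))). intros; rewrite Eap; ring.
      apply ex_series_scalR. apply Ra.
    - apply (ex_series_extR (fun n => -1 * (fs (S j + n)%nat * ee b n * x ^ n))). intros; rewrite Earp; ring.
      apply ex_series_scalR. apply Rb. }
  rewrite <- (is_series_unique _ _ Sa), <- (is_series_unique _ _ Sb).
  rewrite <- !Series_scal_r.
  apply (Series_lt _ _ 1).
  - intros [|j].
    + rewrite !G0. simpl. lra.
    + generalize (Key j). assert (0 < ee d (S j) * x ^ (S j)) by (apply Rmult_lt_0_compat; auto using ee_pos, pow_lt). nra.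
  - generalize (Key 0%nat). assert (0 < ee d 1 * x ^ 1) by (apply Rmult_lt_0_compat; auto using ee_pos, pow_lt). nra.
  - apply (ex_series_extR (fun j => fser fs a x * (ee d j * x ^ j * Gj fs b x j))). intros; ring.
    apply ex_series_scalR. eexists; eauto.
  - apply (ex_series_extR (fun j => fser fs b x * (ee d j * x ^ j * Gj fs a x j))). intros; ring.
    apply ex_series_scalR. eexists; eauto.
Qed.

Lemma ex_series_le_pos (a b : nat -> R) : (forall n, 0 <= a n <= b n) -> ex_series b -> ex_series a.
Proof.
  intros H Hb. apply (@ex_series_le R_AbsRing R_CompleteNormedModule a b); auto.
  intros n. change (Rabs (a n) <= b n). rewrite Rabs_pos_eq; apply H.
Qed.

Lemma fser_pos fs s x : (forall n, 0 < fs n) -> 0 < s -> 0 < x -> ex_series (fterm fs s x) -> 0 < fser fs s x.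
Proof. intros. apply (Series_pos _ 0); auto. intros; left; apply fterm_pos; auto. apply fterm_pos; auto. Qed.

Lemma lower fs a b d x : (forall n, 0 < fs n) ->
  0 < a -> a < b -> 0 < d -> 0 < x ->
  ex_series (fterm fs a x) -> ex_series (fterm fs b x) ->
  ex_series (fterm fs (a + d) x) -> ex_series (fterm fs (b + d) x) ->
  Gamma (a + d) * Gamma b * (fser fs (a + d) x * fser fs b x)
  < fser fs (b + d) x * fser fs a x * (Gamma (b + d) * Gamma a).
Proof.
  intros Hf Ha Hab Hd Hx Ea Eb Ead Ebd.
  set (A := fun s => Gamma (s + d) / Gamma s).
  assert (Apos : forall s, 0 < s -> 0 < A s).
  { intros. unfold A. apply Rdiv_lt_0_compat; apply Gamma_pos; lra. }
  assert (Aid : forall s n, 0 < s -> poch s n * A (s + INR n) = A s * poch (s + d) n).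
  { intros s n Hs. unfold A. generalize (pos_INR n). intros.
    replace (s + INR n + d) with (s + d + INR n) by ring.
    rewrite (Gamma_poch (s + d)), (Gamma_poch s) by lra.
    generalize (poch_pos s n Hs) (Gamma_pos s Hs). intros. field. lra. }
  assert (Aincr : forall s, 0 < s -> A s < A (s + 1)).
  { intros s Hs. unfold A. replace (s + 1 + d) with ((s + d) + 1) by ring.
    rewrite !Gamma_rec by lra. generalize (Gamma_pos s Hs) (Gamma_pos (s+d) ltac:(lra)). intros.
    replace ((s + d) * Gamma (s + d) / (s * Gamma s)) with (Gamma (s + d) / Gamma s * ((s + d) / s)) by (field; lra).
    assert (1 < (s + d) / s) by (apply Rmult_lt_reg_r with s; auto; field_simplify; lra).
    assert (0 < Gamma (s + d) / Gamma s) by (apply Rdiv_lt_0_compat; auto). nra. }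
  assert (Amono : forall s t, 0 < s -> s <= t -> A s <= A t).
  { intros s t Hs Hst. unfold A. generalize (Gamma_ratio_mono s t d Hs Hst Hd) (Gamma_pos s Hs) (Gamma_pos t ltac:(lra)). intros.
    apply Rmult_le_reg_r with (Gamma s * Gamma t). apply Rmult_lt_0_compat; auto.
    replace (Gamma (s + d) / Gamma s * (Gamma s * Gamma t)) with (Gamma (s + d) * Gamma t) by (field; lra).
    replace (Gamma (t + d) / Gamma t * (Gamma s * Gamma t)) with (Gamma (t + d) * Gamma s) by (field; lra). auto. }
  set (al := fterm fs a x). set (r := fun n => poch b n / poch a n).
  set (p := fun n => A (a + INR n)).
  assert (Hal : forall n, 0 < al n) by (intros; apply fterm_pos; auto).
  assert (Ear : forall n, al n * r n = fterm fs b x n).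
  { intros. unfold al, r, fterm. generalize (poch_pos a n Ha) (fact_pos n). intros. field. lra. }
  assert (Eap : forall n, al n * p n = A a * fterm fs (a + d) x n).
  { intros. unfold al, p, fterm. generalize (Aid a n Ha) (fact_pos n). intros HA Hfa.
    replace (fs n * poch a n / INR (Factorial.fact n) * x ^ n * A (a + INR n)) with (fs n / INR (Factorial.fact n) * x ^ n * (poch a n * A (a + INR n))) by (field; lra).
    rewrite HA. field. lra. }
  assert (Earp : forall n, 0 <= al n * r n * p n <= A b * fterm fs (b + d) x n).
  { intros. rewrite Ear. unfold p. generalize (pos_INR n). intros.
    assert (0 < fterm fs b x n) by (apply fterm_pos; auto; lra).
    assert (0 < A (a + INR n)) by (apply Apos; lra).
    assert (A (a + INR n) <= A (b + INR n)) by (apply Amono; lra).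
    assert (fterm fs b x n * A (b + INR n) = A b * fterm fs (b + d) x n).
    { unfold fterm. generalize (Aid b n ltac:(lra)) (fact_pos n). intros HA Hfa.
      replace (fs n * poch b n / INR (Factorial.fact n) * x ^ n * A (b + INR n)) with (fs n / INR (Factorial.fact n) * x ^ n * (poch b n * A (b + INR n))) by (field; lra).
      rewrite HA. field. lra. }
    split. left; apply Rmult_lt_0_compat; auto. rewrite <- H3. apply Rmult_le_compat_l; lra. }
  assert (Earp_ex : ex_series (fun n => al n * r n * p n)).
  { apply ex_series_le_pos with (2 := ex_series_scalR _ (A b) Ebd). auto. }
  assert (C := cheb al r p Hal).
  rewrite (Series_ext _ _ Ear), (Series_ext _ _ Eap) in C.
  rewrite Series_scal_l in C.
  assert (C' : A a * fser fs (a + d) x * fser fs b x < Series (fun n => al n * r n * p n) * fser fs a x).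
  { apply C.
    - intros. apply ratio_incr; auto.
    - intros. unfold p. rewrite S_INR. replace (a + (INR n + 1)) with (a + INR n + 1) by ring.
      apply Aincr. generalize (pos_INR n); lra.
    - auto.
    - apply (ex_series_extR (fterm fs b x)); auto.
    - apply (ex_series_extR (fun n => A a * fterm fs (a + d) x n)); auto. apply ex_series_scalR; auto.
    - auto. }
  assert (Hle : Series (fun n => al n * r n * p n) <= A b * fser fs (b + d) x).
  { unfold fser. rewrite <- Series_scal_l. apply Series_le'; auto. intros; apply Earp.
    apply ex_series_scalR; auto. }
  assert (Fa := fser_pos fs a x Hf Ha Hx Ea).
  assert (C2 : A a * fser fs (a + d) x * fser fs b x < A b * fser fs (b + d) x * fser fs a x).
  { apply Rlt_le_trans with (1 := C'). apply Rmult_le_compat_r; lra. }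
  unfold A in C2.
  generalize (Gamma_pos a Ha) (Gamma_pos b ltac:(lra)). intros.
  apply Rmult_lt_compat_r with (r := Gamma a * Gamma b) in C2; [|apply Rmult_lt_0_compat; auto].
  replace (Gamma (a + d) / Gamma a * fser fs (a + d) x * fser fs b x * (Gamma a * Gamma b))
    with (Gamma (a + d) * Gamma b * (fser fs (a + d) x * fser fs b x)) in C2 by (field; lra).
  replace (Gamma (b + d) / Gamma b * fser fs (b + d) x * fser fs a x * (Gamma a * Gamma b))
    with (fser fs (b + d) x * fser fs a x * (Gamma (b + d) * Gamma a)) in C2 by (field; lra).
  exact C2.
Qed.

Lemma div_lt a1 b1 a2 b2 : 0 < b1 -> 0 < b2 -> a1 * b2 < a2 * b1 -> a1 / b1 < a2 / b2.
Proof.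
  intros H1 H2 H. apply Rmult_lt_reg_r with (b1 * b2). apply Rmult_lt_0_compat; auto.
  replace (a1 / b1 * (b1 * b2)) with (a1 * b2) by (field; lra).
  replace (a2 / b2 * (b1 * b2)) with (a2 * b1) by (field; lra). auto.
Qed.

Theorem corollary1 (fs : nat -> R) (a b delta x : R) :
  (forall n, 0 < fs n) ->
  (forall n, (1 <= n)%nat -> fs (S n) / fs n < fs n / fs (n - 1)%nat) ->
  0 < a -> a < b -> 0 < delta -> 0 < x ->
  ex_series (fterm fs a x) ->
  ex_series (fterm fs b x) ->
  ex_series (fterm fs (a + delta) x) ->
  ex_series (fterm fs (b + delta) x) ->
  Gamma (a + delta) * Gamma b / (Gamma (b + delta) * Gamma a)
    < fser fs (b + delta) x * fser fs a x / (fser fs (a + delta) x * fser fs b x)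
  /\ fser fs (b + delta) x * fser fs a x / (fser fs (a + delta) x * fser fs b x) < 1.
Proof.
  intros Hf Hdec Ha Hab Hd Hx Ea Eb Ead Ebd.
  assert (Fad := fser_pos fs (a + delta) x Hf ltac:(lra) Hx Ead).
  assert (Fb := fser_pos fs b x Hf ltac:(lra) Hx Eb).
  assert (Gbd := Gamma_pos (b + delta) ltac:(lra)). assert (Ga := Gamma_pos a Ha).
  split.
  - apply div_lt. apply Rmult_lt_0_compat; auto. apply Rmult_lt_0_compat; auto.
    apply lower; auto.
  - assert (0 < fser fs (a + delta) x * fser fs b x) by (apply Rmult_lt_0_compat; auto).
    apply Rmult_lt_reg_r with (fser fs (a + delta) x * fser fs b x); auto.
    replace (fser fs (b + delta) x * fser fs a x / (fser fs (a + delta) x * fser fs b x) * (fser fs (a + delta) x * fser fs b x))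
      with (fser fs (b + delta) x * fser fs a x) by (field; lra).
    rewrite Rmult_1_l. apply upper; auto.
Qed.
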